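(* Consider a time-varying graph based on continuous time intervals with $n$ nodes and $m$ edges, where the presence of the edges is specified by a total of $\eta$ continuous time intervals. Then it can be represented as a time-varying graph $H=(V,E,T)$ (with $E\subseteq V\times T\times V\times T$), using only spatial and temporal dynamic edges, with $|E|=O(\eta^2)$ dynamic edges.
   Context: A continuous-time-interval TVG consists of nodes and edges, each edge $\{u,v\}$ being present during a finite union of time intervals $(a,b]\subset\mathbb{R}^+$ of non-zero finite length; $\eta$ is the total number of such intervals over all edges. In the discrete model $H=(V,E,T)$, $V$ is a finite node set, $T$ a finite set of time instants, and a dynamic edge $(u,t_a,v,t_b)\in E$ is a directed edge from node $u$ at time $t_a$ to node $v$ at time $t_b$. A spatial edge has the form $(u,t_a,v,t_a)$ with $u\neq v$; a temporal edge has the form $(u,t_a,u,t_b)$ with $t_a\neq t_b$. The representation takes $T$ to be the set of endpoints of all intervals; for each interval $(a,b]$ of an edge $\{u,v\}$, spatial edges connect $u$ and $v$ at the time instants of $T$ in $[a,b]$, and temporal edges connect $u$ (resp. $v$) between successive such time instants, so that the presence of the edge over the whole interval is encoded. *)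

(* Defs.v *)
From HB Require Import structures.
From mathcomp Require Import all_boot all_order all_algebra.
From mathcomp Require Import reals.
Set Implicit Arguments. Unset Strict Implicit. Unset Printing Implicit Defensive.
Import Order.TTheory GRing.Theory Num.Theory.
Local Open Scope ring_scope.

(* A continuous-time-interval TVG over node set V is given by the list of its
   presence intervals: an entry (u, v, a, b) says that the (undirected) edge
   {u,v} is present during the time interval (a, b].  eta = size of the list. *)
Definition interval_tvg (R : realType) (V : finType) := seq (V * V * R * R).

Definition wf_tvg (R : realType) (V : finType) (G : interval_tvg R V) : Prop :=
  uniq G /\
  (forall u v a b, (u, v, a, b) \in G -> [/\ u != v, 0 <= a & a < b]) /\
  (forall u v a b, (u, v, a, b) \in G -> (v, u, a, b) \notin G).

Definition eta (R : realType) (V : finType) (G : interval_tvg R V) : nat := size G.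

Definition in_T (R : realType) (V : finType) (G : interval_tvg R V) (t : R) : Prop :=
  exists u v a b, (u, v, a, b) \in G /\ (t = a \/ t = b).

Definition spatial_edge (R : realType) (V : finType) (G : interval_tvg R V)
  (e : V * R * V * R) : Prop :=
  let: (x, t, y, t') := e in
  t = t' /\ in_T G t /\
  exists u v a b, (u, v, a, b) \in G /\ a <= t <= b /\
    ((x = u /\ y = v) \/ (x = v /\ y = u)).

Definition temporal_edge (R : realType) (V : finType) (G : interval_tvg R V)
  (e : V * R * V * R) : Prop :=
  let: (x, t, x', t') := e in
  x = x' /\ in_T G t /\ in_T G t' /\ t < t' /\
  (forall s, in_T G s -> ~ (t < s < t')) /\
  exists u v a b, (u, v, a, b) \in G /\ (x = u \/ x = v) /\
    a <= t <= b /\ a <= t' <= b.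

Definition dyn_edge (R : realType) (V : finType) (G : interval_tvg R V)
  (e : V * R * V * R) : Prop :=
  spatial_edge G e \/ temporal_edge G e.

(* Main.v *)
Require Import Defs.
From mathcomp Require Import all_boot all_order all_algebra.
From mathcomp Require Import reals.
From mathcomp Require Import boolp.
From mathcomp Require Import zify.
Set Implicit Arguments. Unset Strict Implicit. Unset Printing Implicit Defensive.
Import Order.TTheory GRing.Theory Num.Theory.
Local Open Scope ring_scope.

Definition Tl (R : realType) (V : finType) (G : interval_tvg R V) : seq R :=
  [seq q.1.2 | q <- G] ++ [seq q.2 | q <- G].
Definition Nl (R : realType) (V : finType) (G : interval_tvg R V) : seq V :=
  [seq q.1.1.1 | q <- G] ++ [seq q.1.1.2 | q <- G].
Definition Ol (R : realType) (V : finType) (G : interval_tvg R V) : seq (V * V) :=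
  [seq (q.1.1.1, q.1.1.2) | q <- G] ++ [seq (q.1.1.2, q.1.1.1) | q <- G].
Definition cand (R : realType) (V : finType) (G : interval_tvg R V) : seq (V * R * V * R) :=
  [seq (p.1, q.1, p.2, q.2) | p <- [seq (x, y) | x <- Nl G, y <- Nl G],
                              q <- [seq (t, t') | t <- Tl G, t' <- Tl G]].
Definition SC (R : realType) (V : finType) (G : interval_tvg R V) : seq (V * R * V * R) :=
  [seq (p.1, t, p.2, t) | p <- Ol G, t <- Tl G].
Definition NT (R : realType) (V : finType) (G : interval_tvg R V) : seq (V * R) :=
  [seq (x, t) | x <- Nl G, t <- Tl G].

Lemma inT_mem (R : realType) (V : finType) (G : interval_tvg R V) t :
  in_T G t -> t \in Tl G.
Proof.
move=> [u [v [a [b [H [->|->]]]]]]; rewrite mem_cat; apply/orP.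
  by left; apply/mapP; exists (u, v, a, b).
by right; apply/mapP; exists (u, v, a, b).
Qed.

Lemma nodeu_mem (R : realType) (V : finType) (G : interval_tvg R V) u v a b :
  (u, v, a, b) \in G -> (u \in Nl G) && (v \in Nl G).
Proof.
move=> H; rewrite !mem_cat; apply/andP; split; apply/orP.
  by left; apply/mapP; exists (u, v, a, b).
by right; apply/mapP; exists (u, v, a, b).
Qed.

Lemma spatial_SC (R : realType) (V : finType) (G : interval_tvg R V) e :
  spatial_edge G e -> e \in SC G.
Proof.
case: e => [[[x t] y] t'] /= [<- [/inT_mem HT [u [v [a [b [H [_ Hor]]]]]]]].
have -> : (x, t, y, t) = (fun p t => (p.1, t, p.2, t)) (x, y) t by [].
apply: allpairs_f => //.
rewrite mem_cat; apply/orP; case: Hor => [[-> ->]|[-> ->]].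
  by left; apply/mapP; exists (u, v, a, b).
by right; apply/mapP; exists (u, v, a, b).
Qed.

Lemma dyn_cand (R : realType) (V : finType) (G : interval_tvg R V) e :
  dyn_edge G e -> e \in cand G.
Proof.
case: e => [[[x t] y] t'] [].
  move=> /[dup] HS [/= <- [/inT_mem HT [u [v [a [b [H [_ Hor]]]]]]]].
  have := nodeu_mem H => /andP [Hu Hv].
  have -> : (x, t, y, t) = (fun p q => (p.1, q.1, p.2, q.2)) (x, y) (t, t) by [].
  apply: allpairs_f; first apply: allpairs_f.
  - by case: Hor => [[-> _]|[-> _]].
  - by case: Hor => [[_ ->]|[_ ->]].
  - by apply: allpairs_f.
move=> [/= <- [/inT_mem HT [/inT_mem HT' [_ [_ [u [v [a [b [H [Hx _]]]]]]]]]]].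
have := nodeu_mem H => /andP [Hu Hv].
have Hxx : x \in Nl G by case: Hx => ->.
have -> : (x, t, x, t') = (fun p q => (p.1, q.1, p.2, q.2)) (x, x) (t, t') by [].
by apply: allpairs_f; apply: allpairs_f.
Qed.

Lemma temporal_NT (R : realType) (V : finType) (G : interval_tvg R V) e :
  temporal_edge G e -> (e.1.1.1, e.1.1.2) \in NT G.
Proof.
case: e => [[[x t] y] t'] /= [_ [/inT_mem HT [_ [_ [_ [u [v [a [b [H [Hx _]]]]]]]]]]].
have := nodeu_mem H => /andP [Hu Hv].
have Hxx : x \in Nl G by case: Hx => ->.
by apply: allpairs_f.
Qed.

Lemma temporal_inj (R : realType) (V : finType) (G : interval_tvg R V) e1 e2 :
  temporal_edge G e1 -> temporal_edge G e2 ->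
  (e1.1.1.1, e1.1.1.2) = (e2.1.1.1, e2.1.1.2) -> e1 = e2.
Proof.
case: e1 => [[[x t] y] t']; case: e2 => [[[x2 t2] y2] t2'] /=.
move=> [<- [_ [HT1 [H1 [N1 _]]]]] [<- [_ [HT2 [H2 [N2 _]]]]] [Ex Et]; subst.
case: (ltgtP t' t2') => [lt|gt|-> //].
  by exfalso; apply: (N2 t' HT1); rewrite H1 lt.
by exfalso; apply: (N1 t2' HT2); rewrite H2 gt.
Qed.

Theorem proposition1 :
  exists C : nat,
    forall (R : realType) (V : finType) (G : interval_tvg R V),
      wf_tvg G ->
      exists l : seq (V * R * V * R),
        uniq l /\
        (forall e, e \in l <-> dyn_edge G e) /\
        (size l <= C * (eta G) ^ 2)%N.
Proof.
exists 8%N => R V G _.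
set l := undup [seq e <- cand G | `[< dyn_edge G e >]].
have Hl : forall e, e \in l <-> dyn_edge G e.
  move=> e; rewrite /l mem_undup mem_filter; split.
    by move=> /andP [/asboolP].
  by move=> H; apply/andP; split; [apply/asboolP | apply: dyn_cand].
have Ul : uniq l by apply: undup_uniq.
exists l; split => //; split => //.
rewrite -(count_predC (fun e => `[< spatial_edge G e >]) l).
have S1 : (count (fun e => `[< spatial_edge G e >]) l <= size (SC G))%N.
  rewrite -size_filter; apply: uniq_leq_size; first exact: filter_uniq.
  by move=> e; rewrite mem_filter => /andP [/asboolP /spatial_SC].
have S2 : (count (predC (fun e => `[< spatial_edge G e >])) l <= size (NT G))%N.
  rewrite -size_filter.
  set f := fun e : V * R * V * R => (e.1.1.1, e.1.1.2).
  have Htemp : forall e, e \in [seq e <- l | predC (fun e => `[< spatial_edge G e >]) e] ->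
      temporal_edge G e.
    move=> e; rewrite mem_filter => /andP [/= /asboolP Hn /Hl []] //.
  rewrite -(size_map f); apply: uniq_leq_size.
    rewrite map_inj_in_uniq; first exact: filter_uniq.
    by move=> e1 e2 H1 H2; apply: temporal_inj; apply: Htemp.
  by move=> p /mapP [e /Htemp He ->]; apply: temporal_NT.
have E1 : size (SC G) = (2 * eta G * (2 * eta G))%N.
  by rewrite size_allpairs /Ol /Tl !size_cat !size_map /eta; lia.
have E2 : size (NT G) = (2 * eta G * (2 * eta G))%N.
  by rewrite size_allpairs /Nl /Tl !size_cat !size_map /eta; lia.
rewrite E1 in S1; rewrite E2 in S2.
have : (count (fun e => `[< spatial_edge G e >]) l + count (predC (fun e => `[< spatial_edge G e >])) l <= 8 * eta G ^ 2)%N.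
  rewrite expnS expn1; lia.
by [].
Qed.
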